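(* Let $(A,B)$ be a finite-dimensional even-symmetric associative superalgebra over an algebraically closed field $\mathbb{K}$ of characteristic zero which is $B$-irreducible and non-simple, different from the one-dimensional algebra with null product, and such that $A_{\bar 0}$ is a semi-simple $A_{\bar 0}$-bimodule. Then a subspace $I$ of $A$ is a minimal graded two-sided ideal of $A$ if and only if $I=\mathbb{K}x$ where $x$ is a non-zero homogeneous element of $\mathrm{Ann}(A)$.
   Context: A superalgebra is $\mathbb{Z}_2$-graded, $A=A_{\bar 0}\oplus A_{\bar 1}$, $A_\alpha A_\beta\subseteq A_{\alpha+\beta}$. An even-symmetric structure on $A$ is a bilinear form $B$ with $B(A_{\bar 0},A_{\bar 1})=B(A_{\bar 1},A_{\bar 0})=0$ which is supersymmetric ($B(x,y)=(-1)^{|x||y|}B(y,x)$), associative ($B(xy,z)=B(x,yz)$) and non-degenerate. $(A,B)$ is $B$-irreducible if its only graded two-sided ideals $I$ with $B|_{I\times I}$ non-degenerate are $\{0\}$ and $A$. A superalgebra is simple if its product is non-zero and it has no graded two-sided ideals other than $\{0\}$ and itself. A graded two-sided ideal $I$ is minimal if $I\notin\{\{0\},A\}$ and every graded two-sided ideal contained in $I$ is $\{0\}$ or $I$. $A_{\bar 0}$ is an $A_{\bar 0}$-bimodule via multiplication; it is semi-simple if every sub-bimodule has a complementary sub-bimodule. $\mathrm{Ann}(A)=\{x: xA=Ax=\{0\}\}$. *)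

(* Defs.v *)
From HB Require Import structures.
From mathcomp Require Import all_boot all_order all_algebra.
Set Implicit Arguments. Unset Strict Implicit. Unset Printing Implicit Defensive.
Import GRing.Theory.
Local Open Scope ring_scope.

Section Super.
Variables (K : fieldType) (V : vectType K).
Variable mul : V -> V -> V.
Variables A0 A1 : {vspace V}.

Definition bilinear_mul :=
  (forall a x y z, mul (a *: x + y) z = a *: mul x z + mul y z) /\
  (forall a x y z, mul z (a *: x + y) = a *: mul z x + mul z y).

Definition associative_mul := forall x y z, mul (mul x y) z = mul x (mul y z).

Definition is_grading :=
  (A0 + A1)%VS = fullv /\ directv (A0 + A1) /\
  (forall x y, x \in A0 -> y \in A0 -> mul x y \in A0) /\
  (forall x y, x \in A0 -> y \in A1 -> mul x y \in A1) /\
  (forall x y, x \in A1 -> y \in A0 -> mul x y \in A1) /\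
  (forall x y, x \in A1 -> y \in A1 -> mul x y \in A0).

Definition assoc_superalgebra := [/\ bilinear_mul, associative_mul & is_grading].

Definition homogeneous (x : V) := (x \in A0) || (x \in A1).

Definition even_symmetric_structure (B : V -> V -> K) :=
  (forall a x y z, B (a *: x + y) z = a * B x z + B y z) /\
  (forall a x y z, B z (a *: x + y) = a * B z x + B z y) /\
  (forall x y, x \in A0 -> y \in A1 -> B x y = 0 /\ B y x = 0) /\
  (* supersymmetric: B x y = (-1)^(|x||y|) B y x for homogeneous x, y *)
  (forall x y, x \in A0 -> homogeneous y -> B x y = B y x) /\
  (forall x y, x \in A1 -> y \in A1 -> B x y = - B y x) /\
  (forall x y z, B (mul x y) z = B x (mul y z)) /\
  (forall x, (forall y, B x y = 0) -> x = 0).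

Definition graded_subspace (I : {vspace V}) := ((I :&: A0) + (I :&: A1))%VS = I.

Definition two_sided_ideal (I : {vspace V}) :=
  forall x y, x \in I -> mul x y \in I /\ mul y x \in I.

Definition graded_ideal (I : {vspace V}) := graded_subspace I /\ two_sided_ideal I.

Definition B_irreducible (B : V -> V -> K) :=
  forall I : {vspace V}, graded_ideal I ->
    (forall x, x \in I -> (forall y, y \in I -> B x y = 0) -> x = 0) ->
    I = 0%VS \/ I = fullv.

Definition simple_superalgebra :=
  (exists x y, mul x y != 0) /\
  forall I : {vspace V}, graded_ideal I -> I = 0%VS \/ I = fullv.

Definition minimal_graded_ideal (I : {vspace V}) :=
  [/\ graded_ideal I, I <> 0%VS, I <> fullv &
      forall J : {vspace V}, graded_ideal J -> (J <= I)%VS ->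
        J = 0%VS \/ J = I].

Definition one_dim_null := \dim (fullv : {vspace V}) = 1%N /\ forall x y, mul x y = 0.

Definition sub_bimodule_A0 (W : {vspace V}) :=
  (W <= A0)%VS /\
  forall a w, a \in A0 -> w \in W -> mul a w \in W /\ mul w a \in W.

Definition A0_semisimple_bimodule :=
  forall W : {vspace V}, sub_bimodule_A0 W ->
    exists W' : {vspace V}, [/\ sub_bimodule_A0 W', (W + W')%VS = A0 &
                                (W :&: W')%VS = 0%VS].

Definition in_Ann (x : V) := forall y, mul x y = 0 /\ mul y x = 0.

End Super.

(* Main.v *)
Require Import Defs.
From HB Require Import structures.
From mathcomp Require Import all_boot all_order all_algebra.
From Stdlib Require Import Classical.
From mathcomp Require Import zify.
Import GRing.Theory.
Local Open Scope ring_scope.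

Section Helpers.
Variables (K : fieldType) (V : vectType K).

Lemma pred_vspace (P : V -> Prop) : P 0 ->
  (forall a x y, P x -> P y -> P (a *: x + y)) ->
  exists W : {vspace V}, forall x, x \in W <-> P x.
Proof.
move=> P0 Plin.
suff H : forall n (W : {vspace V}), (\dim (fullv : {vspace V}) - \dim W <= n)%N ->
  (forall x, x \in W -> P x) -> exists W' : {vspace V}, forall x, x \in W' <-> P x.
  apply: (H (\dim (fullv : {vspace V}) - \dim (0%VS : {vspace V}))%N 0%VS (leqnn _)).
  by move=> x; rewrite memv0 => /eqP ->.
elim=> [|n IH] W Hn HW.
all: case: (classic (exists x, P x /\ x \notin W)) => [[x [Px xW]]|Hno].
2,4: by exists W => x; split; [exact: HW | move=> Px; apply: NNPP => xW; apply: Hno; exists x; split => //; apply/negP].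
all: have WW' : (W <= W + <[x]>)%VS by rewrite addvSl.
all: have neq : W != (W + <[x]>)%VS.
1,3: by apply/eqP => E; move/negP: xW; apply; rewrite E memvE addvSr.
all: have Hlt : (\dim W < \dim (W + <[x]>)%VS)%N by rewrite (ltn_leqif (dimv_leqif_eq WW')) neq.
all: have Hle := dimvS (subvf (W + <[x]>)%VS).
  have : (\dim W < \dim (fullv : {vspace V}))%N by apply: leq_trans Hle.
  by rewrite -subn_gt0 lt0n; move: Hn; rewrite leqn0 => /eqP ->.
apply: (IH (W + <[x]>)%VS).
  move: Hn Hle Hlt; set d := \dim fullv; set a := \dim W; set b := \dim _. lia.
move=> y /memv_addP [w wW [v /vlineP [k ->] ->]].
rewrite addrC -[k *: x + w]/(k *: x + w); apply: Plin => //; exact: HW.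
Qed.
End Helpers.
Lemma double0 (M : zmodType) (m : M) : m = m + m -> m = 0.
Proof. by move=> E; apply: (@addrI _ m); rewrite addr0 -E. Qed.

Section Main.
Variables (K : fieldType) (V : vectType K) (mul : V -> V -> V) (A0 A1 : {vspace V}) (B : V -> V -> K).
Hypothesis Halg : assoc_superalgebra mul A0 A1.
Hypothesis HB : even_symmetric_structure mul A0 A1 B.

Let Hbil := let: And3 h _ _ := Halg in h.
Let Hassoc : associative_mul mul := let: And3 _ h _ := Halg in h.
Let Hgr : is_grading mul A0 A1 := let: And3 _ _ h := Halg in h.

Lemma mul0l z : mul 0 z = 0.
Proof.
have := (Hbil.1 1 0 0 z); rewrite scaler0 addr0 scale1r; exact: double0.
Qed.
Lemma mul0r z : mul z 0 = 0.
Proof.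
have := (Hbil.2 1 0 0 z); rewrite scaler0 addr0 scale1r; exact: double0.
Qed.
Lemma mulDl x y z : mul (x + y) z = mul x z + mul y z.
Proof. by have := Hbil.1 1 x y z; rewrite !scale1r. Qed.
Lemma mulDr x y z : mul z (x + y) = mul z x + mul z y.
Proof. by have := Hbil.2 1 x y z; rewrite !scale1r. Qed.
Lemma mulZl a x z : mul (a *: x) z = a *: mul x z.
Proof. by have := Hbil.1 a x 0 z; rewrite !addr0 mul0l addr0. Qed.
Lemma mulZr a x z : mul z (a *: x) = a *: mul z x.
Proof. by have := Hbil.2 a x 0 z; rewrite !addr0 mul0r addr0. Qed.

Let HBl := HB.1.
Let HBr := HB.2.1.
Let HB01 := HB.2.2.1.
Let HBs0 := HB.2.2.2.1.
Let HBs1 := HB.2.2.2.2.1.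
Let HBa := HB.2.2.2.2.2.1.
Let HBnd := HB.2.2.2.2.2.2.

Lemma B0l z : B 0 z = 0.
Proof.
have := (HBl 1 0 0 z); rewrite scaler0 addr0 mul1r; exact: double0.
Qed.
Lemma B0r z : B z 0 = 0.
Proof.
have := (HBr 1 0 0 z); rewrite scaler0 addr0 mul1r; exact: double0.
Qed.
Lemma BDl x y z : B (x + y) z = B x z + B y z.
Proof. by have := HBl 1 x y z; rewrite scale1r mul1r. Qed.
Lemma BDr x y z : B z (x + y) = B z x + B z y.
Proof. by have := HBr 1 x y z; rewrite scale1r mul1r. Qed.

Lemma decomp x : exists x0 x1, [/\ x0 \in A0, x1 \in A1 & x = x0 + x1].
Proof.
have : x \in (A0 + A1)%VS by rewrite Hgr.1 memvf.
by case/memv_addP => x0 H0 [x1 H1 ->]; exists x0, x1.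
Qed.

Lemma direct0 x0 x1 : x0 \in A0 -> x1 \in A1 -> x0 + x1 = 0 -> x0 = 0 /\ x1 = 0.
Proof.
move=> H0 H1 E.
have E0 : x0 = - x1 by apply/eqP; rewrite -subr_eq0 opprK E.
have : x0 \in (A0 :&: A1)%VS by rewrite memv_cap H0 E0 memvN H1.
rewrite (directv_addP Hgr.2.1) memv0 => /eqP x00.
by split => //; apply/eqP; rewrite -oppr_eq0 -E0 x00.
Qed.

Lemma m00 x y : x \in A0 -> y \in A0 -> mul x y \in A0. Proof. exact: Hgr.2.2.1. Qed.
Lemma m01 x y : x \in A0 -> y \in A1 -> mul x y \in A1. Proof. exact: Hgr.2.2.2.1. Qed.
Lemma m10 x y : x \in A1 -> y \in A0 -> mul x y \in A1. Proof. exact: Hgr.2.2.2.2.1. Qed.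
Lemma m11 x y : x \in A1 -> y \in A1 -> mul x y \in A0. Proof. exact: Hgr.2.2.2.2.2. Qed.

Lemma B01 x y : x \in A0 -> y \in A1 -> B x y = 0. Proof. by move=> h1 h2; case: (HB01 x y h1 h2). Qed.
Lemma B10 x y : x \in A1 -> y \in A0 -> B x y = 0. Proof. by move=> h1 h2; case: (HB01 y x h2 h1). Qed.

Arguments B01 {x y}. Arguments B10 {x y}.
Arguments m00 {x y}. Arguments m01 {x y}. Arguments m10 {x y}. Arguments m11 {x y}.
Definition hom x := homogeneous A0 A1 x.

Lemma hom_mul x y : hom x -> hom y -> hom (mul x y).
Proof.
rewrite /hom /homogeneous => /orP[] hx /orP[] hy; apply/orP.
- by left; apply: m00. - by right; apply: m01. - by right; apply: m10. - by left; apply: m11.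
Qed.

Lemma Bsym0 x y : hom x -> hom y -> B x y = 0 -> B y x = 0.
Proof.
rewrite /hom /homogeneous => /orP[] hx hy E.
- by rewrite -(HBs0 x y hx hy).
- case/orP: hy => hy; first by rewrite (HBs0 y x hy) // /homogeneous hx orbT.
  by rewrite (HBs1 y x hy hx) E oppr0.
Qed.

Arguments Bsym0 {x y}. Arguments hom_mul {x y}.
Lemma hom_ind_all (Q : V -> Prop) : (forall x y, Q x -> Q y -> Q (x + y)) ->
  (forall x, hom x -> Q x) -> forall x, Q x.
Proof.
move=> QD Qh x; case: (decomp x) => x0 [x1 [h0 h1 ->]].
by apply: QD; apply: Qh; rewrite /hom /homogeneous ?h0 ?h1 ?orbT.
Qed.

Lemma graded_decomp (W : {vspace V}) x : graded_subspace A0 A1 W -> x \in W ->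
  exists x0 x1, [/\ x0 \in W, x0 \in A0, x1 \in W, x1 \in A1 & x = x0 + x1].
Proof.
move=> gW; rewrite -{1}gW => /memv_addP [x0 h0 [x1 h1 ->]].
move: h0 h1; rewrite !memv_cap => /andP[a b] /andP[c d].
by exists x0, x1.
Qed.

Lemma hom_ind (W : {vspace V}) (Q : V -> Prop) : graded_subspace A0 A1 W ->
  (forall x y, Q x -> Q y -> Q (x + y)) ->
  (forall x, x \in W -> hom x -> Q x) -> forall x, x \in W -> Q x.
Proof.
move=> gW QD Qh x xW; case: (@graded_decomp W x gW xW) => x0 [x1 [a b c d ->]].
by apply: QD; apply: Qh; rewrite // /hom /homogeneous ?b ?d ?orbT.
Qed.

Arguments graded_decomp {W x}. Arguments hom_ind {W Q}.
Lemma graded_of_mem (W : {vspace V}) : (forall x, x \in W ->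
  exists x0 x1, [/\ x0 \in W, x0 \in A0, x1 \in W, x1 \in A1 & x = x0 + x1]) ->
  graded_subspace A0 A1 W.
Proof.
move=> H; apply/eqP; rewrite eqEsubv subv_add !capvSl /=.
apply/subvP => x /H [x0 [x1 [a b c d ->]]].
by rewrite memv_add // memv_cap ?a ?b ?c ?d.
Qed.

Lemma nondeg_hom x : (forall y, hom y -> B x y = 0) -> x = 0.
Proof.
move=> H; apply: HBnd; apply: (@hom_ind_all (fun y => B x y = 0)) => //.
by move=> y z /= Hy Hz; rewrite BDr Hy Hz addr0.
Qed.


Variable I : {vspace V}.
Hypothesis HI : minimal_graded_ideal mul A0 A1 I.
Hypothesis Hirr : B_irreducible mul A0 A1 B.
Hypothesis Hss : A0_semisimple_bimodule mul A0.

Let gI : graded_subspace A0 A1 I := let: And4 h _ _ _ := HI in h.1.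
Let idI : two_sided_ideal mul I := let: And4 h _ _ _ := HI in h.2.
Let Imin := let: And4 _ _ _ h := HI in h.
Let I0 : I <> 0%VS := let: And4 _ h _ _ := HI in h.
Let If : I <> fullv := let: And4 _ _ h _ := HI in h.

Lemma idIl x y : x \in I -> mul x y \in I. Proof. by move=> h; case: (idI x y h). Qed.
Lemma idIr x y : x \in I -> mul y x \in I. Proof. by move=> h; case: (idI x y h). Qed.

Arguments idIl {x} y. Arguments idIr {x} y.
Lemma isotropic : forall x y, x \in I -> y \in I -> B x y = 0.
Proof.
have [J HJ] : exists J : {vspace V}, forall u, u \in J <-> (u \in I /\ forall y, y \in I -> B u y = 0).
  apply: pred_vspace.
- by split; [exact: mem0v | move=> y _; rewrite B0l].
- move=> a u v [uI Hu] [vI Hv]; split; first by rewrite memvD ?memvZ.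
  by move=> z zI; rewrite HBl Hu // Hv // mulr0 addr0.
have JI : (J <= I)%VS by apply/subvP => u /HJ [].
have gJ0 : graded_subspace A0 A1 J.
  apply: graded_of_mem => u /HJ [uI Hu].
  case: (graded_decomp gI uI) => u0 [u1 [a b c d E]].
  have key : forall y, y \in I -> hom y -> B u0 y = 0 /\ B u1 y = 0.
    move=> y yI /orP[] hy.
    + by have := Hu y yI; rewrite E BDl (B10 d hy) addr0 => h; split.
    + by have := Hu y yI; rewrite E BDl (B01 b hy) add0r => h; split.
  exists u0, u1; split => //; apply/HJ; split => //.
  + apply: (hom_ind gI) => [y z /= Hy Hz|y yI hy]; first by rewrite BDr Hy Hz addr0.
    by case: (key y yI hy).
  + apply: (hom_ind gI) => [y z /= Hy Hz|y yI hy]; first by rewrite BDr Hy Hz addr0.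
    by case: (key y yI hy).
have core : forall y x z, hom y -> x \in J -> hom x -> z \in I -> hom z -> B (mul y x) z = 0.
  move=> y x z hy /HJ [xI Hx] hx zI hz.
  apply: Bsym0; [exact: hz | exact: hom_mul|].
  rewrite -HBa; apply: Bsym0; [exact: hx | exact: hom_mul |].
  by apply: Hx; apply: idIl.
have gJ : graded_ideal mul A0 A1 J.
  split => // x y /HJ [xI Hx]; split; apply/HJ; split.
  + exact: idIl.
  + by move=> z zI; rewrite HBa; apply: Hx; apply: idIr.
  + exact: idIr.
  + have xJ : x \in J by apply/HJ.
    move=> z zI; clear xI Hx.
    move: y x xJ z zI; apply: hom_ind_all => [y1 y2 /= H1 H2 x xJ z zI|y hy].
      by rewrite mulDl BDl H1 ?H2 ?addr0.
    apply: (hom_ind gJ0) => [x1 x2 /= H1 H2 z zI|x xJ hx].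
      by rewrite mulDr BDl H1 ?H2 ?addr0.
    apply: (hom_ind gI) => [z1 z2 /= H1 H2|z zI hz]; first by rewrite BDr H1 H2 addr0.
    exact: core.
case: (Imin J gJ JI) => EJ; last by move=> x y xI yI; move: xI; rewrite -EJ => /HJ [_ H]; apply: H.
exfalso; case: (Hirr I (conj gI idI)).
- move=> u uI Hu; have : u \in J by apply/HJ.
  by rewrite EJ memv0 => /eqP.
- exact: I0.
- exact: If.
Qed.

Lemma I2 x y : x \in I -> y \in I -> mul x y = 0.
Proof. by move=> xI yI; apply: HBnd => z; rewrite HBa; apply: isotropic => //; apply: idIl. Qed.

Lemma FA u i : u \in A0 -> i \in I -> i \in A0 -> mul u i = 0 /\ mul i u = 0.
Proof.
move=> uA iI iA.
have sub : sub_bimodule_A0 mul A0 (I :&: A0)%VS.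
  split; first exact: capvSr.
  move=> a w aA; rewrite !memv_cap => /andP[wI wA].
  by rewrite idIr // idIl // (m00 aA wA) (m00 wA aA).
case: (Hss _ sub) => W' [[W'A0 W'mod] Esum Ecap].
have : u \in (I :&: A0 + W')%VS by rewrite Esum.
case/memv_addP => w wIA [w' w'W ->].
have w'A : w' \in A0 by apply: (subvP W'A0).
move: wIA; rewrite memv_cap => /andP[wI wA].
have c1 : mul w' i \in (I :&: A0 :&: W')%VS.
  by rewrite !memv_cap idIr // (m00 w'A iA) (W'mod i w' iA w'W).2.
have c2 : mul i w' \in (I :&: A0 :&: W')%VS.
  by rewrite !memv_cap idIl // (m00 iA w'A) (W'mod i w' iA w'W).1.
move: c1 c2; rewrite Ecap !memv0 => /eqP c1 /eqP c2.
by rewrite mulDl mulDr c1 c2 !I2 // addr0.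
Qed.

Arguments FA {u i}.
Lemma FB u v j : u \in A0 -> v \in A0 -> j \in I -> j \in A1 -> mul (mul u v) j = 0.
Proof.
move=> uA vA jI jA; apply: nondeg_hom => x /orP[] hx.
- exact: (B10 (m01 (m00 uA vA) jA) hx).
- rewrite !HBa (FA vA (idIl _ jI) (m11 jA hx)).1; exact: B0r.
Qed.

Arguments FB {u v j}.
Lemma three_hom a b c x : hom a -> hom b -> hom c -> x \in I -> hom x ->
  mul a (mul b (mul c x)) = 0.
Proof.
move=> /orP[] ha /orP[] hb /orP[] hc xI /orP[] hx.
- by rewrite (FA hc xI hx).1 !mul0r.
- by rewrite -(Hassoc b c x) (FB hb hc xI hx) mul0r.
- by rewrite -(Hassoc a b (mul c x)) (FB ha hb (idIr _ xI) (m10 hc hx)).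
- by rewrite (FA hb (idIr _ xI) (m11 hc hx)).1 mul0r.
- by rewrite (FA hc xI hx).1 !mul0r.
- by rewrite (FA ha (idIr _ (idIr _ xI)) (m11 hb (m01 hc hx))).1.
- by rewrite -(Hassoc b c x) (FA (m11 hb hc) xI hx).1 mul0r.
- by rewrite -(Hassoc b c x) -(Hassoc a (mul b c) x) (FB ha (m11 hb hc) xI hx).
- by rewrite (FA hc xI hx).1 !mul0r.
- by rewrite -(Hassoc b c x) (FB hb hc xI hx) mul0r.
- by rewrite -(Hassoc a b (mul c x)) -(Hassoc (mul a b) c x) (FA (m11 (m10 ha hb) hc) xI hx).1.
- by rewrite (FA hb (idIr _ xI) (m11 hc hx)).1 mul0r.
- by rewrite (FA hc xI hx).1 !mul0r.
- by rewrite -(Hassoc a b (mul c x)) -(Hassoc (mul a b) c x) (FB (m11 ha hb) hc xI hx).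
- by rewrite -(Hassoc b c x) (FA (m11 hb hc) xI hx).1 mul0r.
- by rewrite -(Hassoc a b (mul c x)) (FA (m11 ha hb) (idIr _ xI) (m11 hc hx)).1.
Qed.

Lemma three a b c x : x \in I -> mul a (mul b (mul c x)) = 0.
Proof.
move: a b c x; apply: hom_ind_all => [a1 a2 /= H1 H2 b c x xI|a ha].
  by rewrite mulDl H1 ?H2 ?addr0.
apply: hom_ind_all => [b1 b2 /= H1 H2 c x xI|b hb].
  by rewrite mulDl mulDr H1 ?H2 ?addr0.
apply: hom_ind_all => [c1 c2 /= H1 H2 x xI|c hc].
  by rewrite mulDl !mulDr H1 ?H2 ?addr0.
apply: (hom_ind gI) => [x1 x2 /= H1 H2|x xI hx]; first by rewrite !mulDr H1 H2 addr0.
exact: three_hom.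
Qed.

Lemma AI0 a x : x \in I -> mul a x = 0.
Proof.
have [L HL] : exists L : {vspace V}, forall u, u \in L <-> (u \in I /\ forall a, mul a u = 0).
  apply: pred_vspace.
  - by split; [exact: mem0v | move=> a'; rewrite mul0r].
  - move=> k u v [uI Hu] [vI Hv]; split; first by rewrite memvD ?memvZ.
    by move=> a'; rewrite mulDr mulZr Hu Hv scaler0 addr0.
have LI : (L <= I)%VS by apply/subvP => u /HL [].
have gL0 : graded_subspace A0 A1 L.
  apply: graded_of_mem => u /HL [uI Hu].
  case: (graded_decomp gI uI) => u0 [u1 [h1 h2 h3 h4 E]].
  have key : forall a, mul a u0 = 0 /\ mul a u1 = 0.
    apply: hom_ind_all => [a1 a2 /= [H1 H1'] [H2 H2']|a' /orP[] ha].
    + by rewrite !mulDl H1 H1' H2 H2' !addr0.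
    + by apply: direct0; [exact: m00 | exact: m01 | rewrite -mulDr -E Hu].
    + have [] : mul a' u1 = 0 /\ mul a' u0 = 0 by apply: direct0; [exact: m11 | exact: m10 | rewrite addrC -mulDr -E Hu].
      by move=> -> ->.
  exists u0, u1; split => //; apply/HL; split => // a'; by case: (key a').
have gL : graded_ideal mul A0 A1 L.
  split => // u y /HL [uI Hu]; split; apply/HL; split.
  + exact: idIl.
  + by move=> a'; rewrite -Hassoc Hu mul0l.
  + exact: idIr.
  + by move=> a'; rewrite -Hassoc Hu.
case: (Imin L gL LI) => EL; last by move=> xI; move: xI; rewrite -EL => /HL [_ ->].
exfalso; apply: I0; apply/eqP; rewrite -subv0; apply/subvP => y yI; rewrite memv0.
have step : forall w, w \in I -> (forall a, mul a w = 0) -> w = 0.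
  move=> w wI Hw; have : w \in L by apply/HL.
  by rewrite EL memv0 => /eqP.
have h1 : forall b c, mul b (mul c y) = 0.
  by move=> b c; apply: step; [apply: idIr; apply: idIr | move=> a'; apply: three].
have h2 : forall c, mul c y = 0 by move=> c; apply: step; [apply: idIr | move=> b; exact: h1].
by apply/eqP; apply: step.
Qed.

Lemma IA0 : forall x, x \in I -> forall a, mul x a = 0.
Proof.
apply: (hom_ind gI) => [x1 x2 /= H1 H2 a|x xI hx].
  by rewrite mulDl H1 H2 addr0.
apply: hom_ind_all => [a1 a2 /= H1 H2|a ha]; first by rewrite mulDr H1 H2 addr0.
apply: nondeg_hom => y hy; apply: Bsym0; [exact: hy | exact: hom_mul |].
by rewrite -HBa AI0 // B0l.
Qed.

Lemma line_graded x : hom x -> in_Ann mul x -> graded_ideal mul A0 A1 <[x]>%VS.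
Proof.
move=> hx Hx; split.
- apply: graded_of_mem => u /vlineP [k ->].
  case/orP: hx => hx.
  + by exists (k *: x), 0; split; rewrite ?mem0v ?addr0 // memvZ // memv_line.
  + by exists 0, (k *: x); split; rewrite ?mem0v ?add0r // memvZ // memv_line.
- move=> u y /vlineP [k ->]; rewrite mulZl mulZr (Hx y).1 (Hx y).2 scaler0.
  by split; apply: mem0v.
Qed.

Lemma forward : exists x : V, [/\ x != 0, homogeneous A0 A1 x, in_Ann mul x & I = <[x]>%VS].
Proof.
have [y [yI yh yn]] : exists y, [/\ y \in I, hom y & y != 0].
  apply: NNPP => H; apply: I0; apply/eqP; rewrite -subv0; apply/subvP => x xI.
  rewrite memv0; apply/negPn/negP => nx.
  case: (graded_decomp gI xI) => x0 [x1 [h1 h2 h3 h4 E]].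
  case: (eqVneq x0 0) => [x00|x0n].
    apply: H; exists x1; split; rewrite /hom /homogeneous ?h4 ?orbT //.
    by move: nx; rewrite E x00 add0r.
  by apply: H; exists x0; split; rewrite /hom /homogeneous ?h2.
have yA : in_Ann mul y by move=> z; split; [exact: IA0 | apply: AI0].
exists y; split => //.
case: (Imin _ (@line_graded y yh yA)); first by rewrite -memvE.
  by move=> E; move: (memv_line y); rewrite E memv0 (negPf yn).
by move=> ->.
Qed.

End Main.

Lemma backward (K : fieldType) (V : vectType K) (mul : V -> V -> V) (A0 A1 : {vspace V}) (B : V -> V -> K) :
  assoc_superalgebra mul A0 A1 -> even_symmetric_structure mul A0 A1 B ->
  ~ one_dim_null mul -> forall x : V, x != 0 -> homogeneous A0 A1 x -> in_Ann mul x ->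
  minimal_graded_ideal mul A0 A1 <[x]>%VS.
Proof.
move=> Halg HB Hn x xn hx Ax.
have gl := @line_graded K V mul A0 A1 Halg x hx Ax.
split => //.
- by move=> E; move: (memv_line x); rewrite E memv0 (negPf xn).
- move=> E; apply: Hn; split.
    by rewrite -E dim_vline xn.
  move=> u v; have : u \in <[x]>%VS by rewrite E memvf.
  by case/vlineP => k ->; rewrite (@mulZl K V mul A0 A1 Halg) (Ax v).1 scaler0.
- move=> J _ JS; case: (eqVneq J 0%VS) => [->|Jn]; [by left | right].
  apply/eqP; rewrite eqEdim JS dim_vline xn lt0n dimv_eq0 Jn.
  done.
Qed.


Theorem mainTheorem13 (K : closedFieldType) (V : vectType K)
  (mul : V -> V -> V) (A0 A1 : {vspace V}) (B : V -> V -> K) :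
  [pchar K] =i pred0 ->
  assoc_superalgebra mul A0 A1 ->
  even_symmetric_structure mul A0 A1 B ->
  B_irreducible mul A0 A1 B ->
  ~ simple_superalgebra mul A0 A1 ->
  ~ one_dim_null mul ->
  A0_semisimple_bimodule mul A0 ->
  forall I : {vspace V},
    minimal_graded_ideal mul A0 A1 I <->
    exists x : V, [/\ x != 0, homogeneous A0 A1 x, in_Ann mul x & I = <[x]>%VS].
Proof.
move=> _ Halg HB Hirr _ Hn Hss I; split.
- move=> HI; exact: (@forward _ _ _ _ _ _ Halg HB I HI Hirr Hss).
- by case=> x [xn hx Ax ->]; exact: (@backward _ _ _ _ _ B Halg HB Hn x xn hx Ax).
Qed.
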